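(* Let $\Sigma$ be a germ at $0$ of a closed subset of $\mathbb{R}^n$ with $0\in\Sigma$, let $r\ge1$, $n\ge p$, and $f\in\mathcal{E}_{[r+1]}(n,p)$. The following are equivalent: (1) $f$ satisfies condition $(\widetilde K^\delta_\Sigma)$: for every $g\in\mathcal{E}_{[r+1]}(n,p)$ with $j^rg(\Sigma;0)=j^rf(\Sigma;0)$ there is $\delta>0$ (depending on $g$) with $d(x,\Sigma)\kappa(df(x))+\|g(x)\|\succsim d(x,\Sigma)^{r+1-\delta}$ near $0$; (2) for every such $g$ there is $\delta>0$ with $d(x,\Sigma)\left(\dfrac{\Gamma(\operatorname{grad}g_1(x),\dots,\operatorname{grad}g_p(x))}{\sum_{j=1}^p\Gamma((\operatorname{grad}g_i(x))_{i\neq j})}\right)^{1/2}+\|g(x)\|\succsim d(x,\Sigma)^{r+1-\delta}$ near $0$; (3) for every such $g$ there is $\delta>0$ with $d(x,\Sigma)\|dg^*(x)y\|+\|g(x)\|\succsim d(x,\Sigma)^{r+1-\delta}$ for $x$ near $0$, uniformly in $y\in\mathbb{S}^{p-1}$; (4) for every such $g$ there is $\delta>0$ with $d(x,\Sigma)\|df^*(x)y\|+\|g(x)\|\succsim d(x,\Sigma)^{r+1-\delta}$ for $x$ near $0$, uniformly in $y\in\mathbb{S}^{p-1}$.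
   Context: $\mathcal{E}_{[s]}(n,p)$ is the set of germs at $0$ of $C^s$ maps $(\mathbb{R}^n,0)\to(\mathbb{R}^p,0)$. For $f,g\in\mathcal{E}_{[s]}(n,p)$, $j^rg(\Sigma;0)=j^rf(\Sigma;0)$ means there is a neighbourhood $U$ of $0$ such that the $r$-jets of $f$ and $g$ agree at every point of $\Sigma\cap U$. $d(x,\Sigma)$ is the distance to $\Sigma$. $\phi\precsim\psi$ means $\phi\le K\psi$ on some closed ball about $0$ for some $K>0$. The Kuo distance of $v_1,\dots,v_p\in\mathbb{R}^n$ is $\kappa(v_1,\dots,v_p)=\min_i\operatorname{dist}(v_i,\operatorname{span}\{v_j:j\ne i\})$ and $\kappa(df(x))=\kappa(\operatorname{grad}f_1(x),\dots,\operatorname{grad}f_p(x))$. $\Gamma$ denotes the Gram determinant $\Gamma(v_1,\dots,v_k)=\det(\langle v_i,v_j\rangle)$ (empty family: $1$). $df^*(x)y=\sum_iy_i\operatorname{grad}f_i(x)$; $\mathbb{S}^{p-1}$ is the unit sphere in $\mathbb{R}^p$. *)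

(* Defs.v *)
From Stdlib Require Import Reals ClassicalEpsilon.
From mathcomp Require Import ssreflect ssrbool ssrfun eqtype ssrnat seq fintype bigop.
From mathcomp Require Import fingroup perm.

Set Implicit Arguments.
Unset Strict Implicit.

Local Open Scope R_scope.

Definition vec (n : nat) := 'I_n -> R.
Definition vzero {n : nat} : vec n := fun _ => 0.
Definition vsum (n : nat) (F : 'I_n -> R) : R := \big[Rplus/0]_(i < n) F i.
Definition dot (n : nat) (x y : vec n) : R := vsum (fun i => x i * y i).
Definition vnorm (n : nat) (x : vec n) : R := sqrt (dot x x).
Definition vsub (n : nat) (x y : vec n) : vec n := fun i => x i - y i.

(** Infimum of a set of reals (chosen classically; meaningful when the set
    is nonempty and bounded below, which is the case for all uses below). *)
Definition is_glb (E : R -> Prop) (m : R) : Prop :=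
  (forall y, E y -> m <= y) /\ (forall b, (forall y, E y -> b <= y) -> b <= m).
Definition Rinf (E : R -> Prop) : R := epsilon (inhabits 0) (is_glb E).

Definition dist_set (n : nat) (S : vec n -> Prop) (x : vec n) : R :=
  Rinf (fun d => exists y, S y /\ d = vnorm (vsub x y)).

Definition closed_vset (n : nat) (S : vec n -> Prop) : Prop :=
  forall x, ~ S x -> exists eps, 0 < eps /\
    forall y, vnorm (vsub y x) < eps -> ~ S y.

Definition span_except (n p : nat) (v : 'I_p -> vec n) (i : 'I_p) : vec n -> Prop :=
  fun w => exists c : 'I_p -> R, c i = 0 /\
    forall k, w k = \big[Rplus/0]_(j < p) (c j * v j k).
Definition kuo (n p : nat) (v : 'I_p -> vec n) : R :=
  Rinf (fun d => exists i : 'I_p, d = dist_set (span_except v i) (v i)).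

(** Determinant (Leibniz formula) and Gram determinant; the empty family
    has Gram determinant 1. *)
Definition det (k : nat) (A : 'I_k -> 'I_k -> R) : R :=
  \big[Rplus/0]_(s : {perm 'I_k})
     ((if odd_perm s then -1 else 1) * \big[Rmult/1]_(i < k) A i (s i)).
Definition gram (n k : nat) (v : 'I_k -> vec n) : R :=
  det (fun i j => dot (v i) (v j)).

(** Partial derivatives (intrinsic: the unique limit when it exists). *)
Definition shift (n : nat) (x : vec n) (i : 'I_n) (t : R) : vec n :=
  fun j => x j + (if j == i then t else 0).
Definition partial (n : nat) (h : vec n -> R) (i : 'I_n) (x : vec n) : R :=
  epsilon (inhabits 0)
    (fun l => derivable_pt_lim (fun t => h (shift x i t)) 0 l).
Fixpoint dpart (n : nat) (l : seq 'I_n) (h : vec n -> R) : vec n -> R :=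
  match l with
  | [::] => h
  | i :: l' => partial (dpart l' h) i
  end.
Definition grad (n : nat) (h : vec n -> R) (x : vec n) : vec n :=
  fun i => partial h i x.

Definition comp (n p : nat) (F : vec n -> vec p) (k : 'I_p) : vec n -> R :=
  fun x => F x k.

Definition cont_on (n : nat) (U : vec n -> Prop) (h : vec n -> R) : Prop :=
  forall x, U x -> forall eps, 0 < eps -> exists del, 0 < del /\
    forall y, U y -> vnorm (vsub y x) < del -> Rabs (h y - h x) < eps.
Definition Ck_on (n : nat) (s : nat) (U : vec n -> Prop) (h : vec n -> R) : Prop :=
  (forall l : seq 'I_n, (size l <= s)%N -> cont_on U (dpart l h)) /\
  (forall (l : seq 'I_n) (i : 'I_n) x, (size l < s)%N -> U x ->
      exists d, derivable_pt_lim (fun t => dpart l h (shift x i t)) 0 d).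
Definition ball0 (n : nat) (rho : R) : vec n -> Prop := fun x => vnorm x < rho.

(** E_[s](n,p): germs at 0 of C^s maps (R^n,0) -> (R^p,0) (represented by
    maps defined on R^n that are C^s on some ball about 0 and vanish at 0). *)
Definition Egerm (n p : nat) (s : nat) (F : vec n -> vec p) : Prop :=
  (forall k, F (@vzero n) k = 0) /\
  exists rho, 0 < rho /\ forall k, Ck_on s (@ball0 n rho) (comp F k).

Definition jet_eq (n p : nat) (Sigma : vec n -> Prop) (r : nat)
    (f g : vec n -> vec p) : Prop :=
  exists rho, 0 < rho /\ forall x, Sigma x -> vnorm x < rho ->
    forall (k : 'I_p) (l : seq 'I_n), (size l <= r)%N ->
      dpart l (comp f k) x = dpart l (comp g k) x.

Definition kuo_df (n p : nat) (F : vec n -> vec p) (x : vec n) : R :=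
  kuo (fun i : 'I_p => grad (comp F i) x).

Definition gram_quot (n p : nat) (F : vec n -> vec p) (x : vec n) : R :=
  gram (fun i : 'I_p => grad (comp F i) x) /
  \big[Rplus/0]_(j < p) gram (fun i : 'I_p.-1 => grad (comp F (lift j i)) x).

Definition dstar (n p : nat) (F : vec n -> vec p) (x : vec n) (y : vec p) : vec n :=
  fun m => \big[Rplus/0]_(i < p) (y i * grad (comp F i) x m).

(** Real power with the convention 0^a = 0 (only used with base d(x,Sigma) >= 0). *)
Definition rpow (x a : R) : R := if Rlt_dec 0 x then Rpower x a else 0.

Definition gtrsim (n : nat) (phi psi : vec n -> R) : Prop :=
  exists K, 0 < K /\ exists rho, 0 < rho /\
    forall x, vnorm x <= rho -> psi x <= K * phi x.

Definition gtrsim_sphere (n p : nat) (phi psi : vec n -> vec p -> R) : Prop :=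
  exists K, 0 < K /\ exists rho, 0 < rho /\
    forall x y, vnorm x <= rho -> vnorm y = 1 -> psi x y <= K * phi x y.

(* Main.v *)
Require Import Defs.
From Stdlib Require Import Reals Lra Lia Psatz ClassicalEpsilon FunctionalExtensionality Classical.
From mathcomp Require Import all_boot all_order fingroup perm all_algebra.
From mathcomp Require Import Rstruct.
From mathcomp Require lra ring.
Set Implicit Arguments.
Unset Strict Implicit.
Local Open Scope R_scope.

Section P1.

Lemma sumR_ge0 (n : nat) (F : 'I_n -> R) : (forall i, 0 <= F i) -> 0 <= \big[Rplus/0]_(i < n) F i.
Proof. move=> H; elim/big_ind: _ => //; [lra | move=> *; lra]. Qed.

Lemma sumR_le (n : nat) (F G : 'I_n -> R) : (forall i, F i <= G i) ->
  \big[Rplus/0]_(i < n) F i <= \big[Rplus/0]_(i < n) G i.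
Proof. move=> H; elim/big_ind2: _ => //; [lra | move=> *; lra]. Qed.

Lemma sumR_abs (n : nat) (F : 'I_n -> R) :
  Rabs (\big[Rplus/0]_(i < n) F i) <= \big[Rplus/0]_(i < n) Rabs (F i).
Proof.
elim/big_ind2: _ => //; first by rewrite Rabs_R0; lra.
  move=> a b c d H1 H2; apply: Rle_trans (Rabs_triang _ _) _; lra.
move=> i _; lra.
Qed.

Lemma sumR_scal (n : nat) (c : R) (F : 'I_n -> R) :
  \big[Rplus/0]_(i < n) (c * F i) = c * \big[Rplus/0]_(i < n) F i.
Proof. by rewrite big_distrr. Qed.

Lemma sumR_const (n : nat) (c : R) : \big[Rplus/0]_(i < n) c = INR n * c.
Proof.
elim: n => [|n IH]; first by rewrite big_ord0 /=; lra.
by rewrite big_ord_recr IH S_INR /=; lra.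
Qed.

Lemma sumR_ext (n : nat) (F G : 'I_n -> R) : (forall i, F i = G i) ->
  \big[Rplus/0]_(i < n) F i = \big[Rplus/0]_(i < n) G i.
Proof. by move=> H; apply: eq_bigr => i _. Qed.

Lemma sumR_split (n : nat) (F G : 'I_n -> R) :
  \big[Rplus/0]_(i < n) (F i + G i) = \big[Rplus/0]_(i < n) F i + \big[Rplus/0]_(i < n) G i.
Proof. by rewrite big_split. Qed.

Lemma sumR_term (n : nat) (F : 'I_n -> R) (i : 'I_n) : (forall j, 0 <= F j) ->
  F i <= \big[Rplus/0]_(j < n) F j.
Proof.
move=> H; rewrite (bigD1 i) //=.
have : 0 <= \big[Rplus/0]_(j < n | j != i) F j by elim/big_ind: _ => [|a b ha hb|j _]; try lra; apply H.
move=> h; rewrite -{1}(Rplus_0_r (F i)); apply: Rplus_le_compat_l; exact: h.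
Qed.

Lemma dot_ge0 (n : nat) (x : vec n) : 0 <= dot x x.
Proof. apply: sumR_ge0 => i; nra. Qed.

Lemma dot_ext (n : nat) (x x' y y' : vec n) : (forall i, x i = x' i) -> (forall i, y i = y' i) ->
  dot x y = dot x' y'.
Proof. by move=> H1 H2; apply: sumR_ext => i; rewrite H1 H2. Qed.

Lemma vnorm_ext (n : nat) (x y : vec n) : (forall i, x i = y i) -> vnorm x = vnorm y.
Proof. by move=> H; rewrite /vnorm (dot_ext H H). Qed.

Lemma vnorm_ge0 (n : nat) (x : vec n) : 0 <= vnorm x.
Proof. exact: sqrt_pos. Qed.

Lemma vnorm_sq (n : nat) (x : vec n) : vnorm x * vnorm x = dot x x.
Proof. by rewrite /vnorm sqrt_sqrt //; apply: dot_ge0. Qed.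

Lemma coord_le_norm (n : nat) (x : vec n) (i : 'I_n) : Rabs (x i) <= vnorm x.
Proof.
have H : x i * x i <= dot x x by rewrite /dot /vsum; apply: (sumR_term (F := fun j => x j * x j)) => j; nra.
rewrite /vnorm -(sqrt_Rsqr (Rabs (x i))); last exact: Rabs_pos.
apply: sqrt_le_1_alt; rewrite /Rsqr -Rabs_mult Rabs_pos_eq; [exact H | nra].
Qed.

Lemma norm_le_const (n : nat) (x : vec n) (c : R) : (forall i, Rabs (x i) <= c) ->
  vnorm x <= sqrt (INR n) * c.
Proof.
move=> H.
have c0 : 0 <= c \/ n = 0%N.
  case: n x H => [|n] x H; [by right| left; apply: Rle_trans (H ord0); apply: Rabs_pos].
case: c0 => [c0|n0].
  rewrite -(sqrt_Rsqr c) // -sqrt_mult; [|apply: pos_INR| apply: Rle_0_sqr].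
  apply: sqrt_le_1_alt; rewrite /dot /vsum /Rsqr -sumR_const; apply: sumR_le => i.
  have := H i; have := Rabs_pos (x i).
  move=> *; rewrite -(Rabs_pos_eq (x i * x i)); [rewrite Rabs_mult; nra|nra].
subst n; rewrite /vnorm /dot /vsum big_ord0 sqrt_0 /=; lra.
Qed.

Lemma dot_sym (n : nat) (x y : vec n) : dot x y = dot y x.
Proof. by apply: sumR_ext => i; ring. Qed.

Lemma dot_zero (n : nat) (x y : vec n) : dot x x = 0 -> dot x y = 0.
Proof.
move=> H.
have Hi : forall i, x i = 0.
  move=> i; have := coord_le_norm x i; rewrite /vnorm H sqrt_0 => h.
  by move: h; rewrite /Rabs; case: Rcase_abs => s0 h1; lra.
by rewrite /dot /vsum (sumR_ext (G := fun _ => 0)) ?big1 // => i; rewrite Hi; ring.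
Qed.

Lemma CS_sq (n : nat) (x y : vec n) : dot x y * dot x y <= dot x x * dot y y.
Proof.
have Hq : forall t, 0 <= t * t * dot x x + 2 * t * dot x y + dot y y.
  move=> t.
  have -> : t * t * dot x x + 2 * t * dot x y + dot y y =
     dot (fun i => t * x i + y i) (fun i => t * x i + y i).
    transitivity (\big[Rplus/0]_(i<n) ((t*t)*(x i*x i) + ((2*t)*(x i*y i) + y i*y i))).
      by rewrite !sumR_split !sumR_scal /dot /vsum; ring.
    by apply: sumR_ext => i; ring.
  exact: dot_ge0.
have := dot_ge0 x; case=> Hx.
  have := Hq (- dot x y / dot x x).
  have -> : - dot x y / dot x x * (- dot x y / dot x x) * dot x x + 2 * (- dot x y / dot x x) * dot x y + dot y y
     = dot y y - dot x y * dot x y / dot x x by field; lra.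
  move=> h.
  have : dot x y * dot x y / dot x x <= dot y y by lra.
  move=> h2; have h3 := Rmult_le_compat_l (dot x x) _ _ (Rlt_le _ _ Hx) h2.
  by move: h3; have -> : dot x x * (dot x y * dot x y / dot x x) = dot x y * dot x y by field; lra.
rewrite (dot_zero y (esym Hx)) -Hx; lra.
Qed.

Lemma CS (n : nat) (x y : vec n) : Rabs (dot x y) <= vnorm x * vnorm y.
Proof.
rewrite /vnorm -sqrt_mult; try apply: dot_ge0.
rewrite -sqrt_Rsqr_abs; apply: sqrt_le_1_alt; rewrite /Rsqr; exact: CS_sq.
Qed.

Lemma minkowski (n : nat) (u v w : vec n) : (forall i, w i = u i + v i) ->
  vnorm w <= vnorm u + vnorm v.
Proof.
move=> H.
have Hd : dot w w = dot u u + 2 * dot u v + dot v v.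
  transitivity (\big[Rplus/0]_(i<n) (u i * u i + (2 * (u i * v i) + v i * v i))).
    by apply: sumR_ext => i; rewrite H; ring.
  by rewrite !sumR_split sumR_scal /dot /vsum; ring.
have := CS u v; have := vnorm_sq u; have := vnorm_sq v; have := vnorm_sq w.
have := vnorm_ge0 u; have := vnorm_ge0 v; have := vnorm_ge0 w.
have := Rle_abs (dot u v).
move=> *; nra.
Qed.

Lemma vnorm_scal (n : nat) (c : R) (u v : vec n) : (forall i, v i = c * u i) ->
  vnorm v = Rabs c * vnorm u.
Proof.
move=> H; rewrite /vnorm.
rewrite (dot_ext (x' := fun i => c * u i) (y' := fun i => c * u i)) //.
have -> : dot (fun i => c * u i) (fun i => c * u i) = (c * c) * dot u u.
  by rewrite /dot /vsum -sumR_scal; apply: sumR_ext => i; ring.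
rewrite sqrt_mult; [|nra| apply: dot_ge0].
by rewrite -/(Rsqr c) sqrt_Rsqr_abs.
Qed.

Lemma vsub_sym (n : nat) (x y : vec n) : vnorm (vsub x y) = vnorm (vsub y x).
Proof.
rewrite [RHS](vnorm_scal (c := -1) (u := vsub x y) (v := vsub y x)); last by move=> i; rewrite /vsub; ring.
by rewrite Rabs_Ropp Rabs_R1; ring.
Qed.

Lemma vsub_tri (n : nat) (x y z : vec n) :
  vnorm (vsub x z) <= vnorm (vsub x y) + vnorm (vsub y z).
Proof. by apply: minkowski => i; rewrite /vsub; ring. Qed.

Lemma vnorm_vsub0 (n : nat) (x : vec n) : vnorm (vsub x vzero) = vnorm x.
Proof. by apply: vnorm_ext => i; rewrite /vsub /vzero; ring. Qed.

Lemma vnorm_tri_sub (n : nat) (x y : vec n) : vnorm x <= vnorm y + vnorm (vsub x y).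
Proof. by apply: minkowski => i; rewrite /vsub; ring. Qed.

Lemma Rinf_spec (E : R -> Prop) : (exists x, E x) -> (exists m, forall y, E y -> m <= y) ->
  is_glb E (Rinf E).
Proof.
move=> [x Ex] [m Hm].
have Hb : bound (fun z => E (- z)) by exists (- m) => z Ez; have := Hm _ Ez; lra.
have He : exists z, E (- z) by exists (- x); rewrite Ropp_involutive.
have [l [Hl1 Hl2]] := completeness _ Hb He.
have G : is_glb E (- l).
  split.
    move=> y Ey; have : - y <= l by apply: Hl1; rewrite Ropp_involutive. lra.
  move=> b Hb'; have : l <= - b.
    apply: Hl2 => z Ez; have := Hb' _ Ez; lra.
  lra.
rewrite /Rinf; apply: (epsilon_spec (inhabits 0) (is_glb E)); by exists (- l).
Qed.

Lemma Rinf_le (E : R -> Prop) y : E y -> (exists m, forall y, E y -> m <= y) -> Rinf E <= y.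
Proof. move=> Ey Hb; have [H _] := Rinf_spec (ex_intro _ y Ey) Hb; exact: H. Qed.

Lemma Rinf_ge (E : R -> Prop) b : (exists x, E x) -> (forall y, E y -> b <= y) -> b <= Rinf E.
Proof. move=> He Hb; have [_ H] := Rinf_spec He (ex_intro _ b Hb); exact: H. Qed.

Lemma Rinf_approx (E : R -> Prop) e : (exists x, E x) -> (exists m, forall y, E y -> m <= y) ->
  Rinf E < e -> exists y, E y /\ y < e.
Proof.
move=> He Hb Hlt; apply: NNPP => Hn.
have : e <= Rinf E.
  apply: Rinf_ge => // y Ey; apply: Rnot_lt_le => h; apply: Hn; by exists y.
lra.
Qed.

Lemma dist_ge0 (n : nat) (S : vec n -> Prop) x : (exists y, S y) -> 0 <= dist_set S x.
Proof.
move=> [y Sy]; apply: Rinf_ge; first by exists (vnorm (vsub x y)), y.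
by move=> d [z [_ ->]]; apply: vnorm_ge0.
Qed.

Lemma dist_le (n : nat) (S : vec n -> Prop) x y : S y -> dist_set S x <= vnorm (vsub x y).
Proof.
move=> Sy; apply: Rinf_le; first by exists y.
by exists 0 => d [z [_ ->]]; apply: vnorm_ge0.
Qed.

Lemma dist_approx (n : nat) (S : vec n -> Prop) x e : (exists y, S y) -> dist_set S x < e ->
  exists y, S y /\ vnorm (vsub x y) < e.
Proof.
move=> [y0 Sy0] H.
have H1 : exists d, (fun d => exists y, S y /\ d = vnorm (vsub x y)) d.
  by exists (vnorm (vsub x y0)), y0.
have H2 : exists m, forall d, (fun d => exists y, S y /\ d = vnorm (vsub x y)) d -> m <= d.
  by exists 0 => d [z [_ ->]]; apply: vnorm_ge0.
have [d [[y [Sy ->]] Hd]] := Rinf_approx H1 H2 H.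
by exists y.
Qed.

End P1.


Lemma sumR_sub (n : nat) (F G : 'I_n -> R) :
  \big[Rplus/0]_(i < n) (F i - G i) = \big[Rplus/0]_(i < n) F i - \big[Rplus/0]_(i < n) G i.
Proof.
rewrite (sumR_ext (G := fun i => F i + (-1) * G i)); last by move=> i; ring.
by rewrite sumR_split sumR_scal; ring.
Qed.

Lemma sumR_delta (n : nat) (a : 'I_n -> R) (i : 'I_n) :
  \big[Rplus/0]_(j < n) (if j == i then a j else 0) = a i.
Proof. by rewrite -big_mkcond big_pred1_eq. Qed.

Lemma sumR_lt (n : nat) (F G : 'I_n -> R) : (0 < n)%N -> (forall i, F i < G i) ->
  \big[Rplus/0]_(i < n) F i < \big[Rplus/0]_(i < n) G i.
Proof.
case: n F G => [//|n] F G _ H.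
rewrite big_ord_recr [X in _ < X]big_ord_recr /=.
apply: Rplus_le_lt_compat; last exact: H.
by apply: sumR_le => i; apply: Rlt_le.
Qed.

Definition vcomb (n p : nat) (v : 'I_p -> vec n) (y : 'I_p -> R) : vec n :=
  fun m => \big[Rplus/0]_(i < p) (y i * v i m).

Lemma span_nonempty (n p : nat) (v : 'I_p -> vec n) i : exists w, span_except v i w.
Proof.
exists vzero, (fun _ => 0); split => // k.
by rewrite /vzero big1 // => j _; ring.
Qed.

Lemma kuo_lb (n p : nat) (v : 'I_p -> vec n) :
  exists m, forall d, (fun d => exists i : 'I_p, d = dist_set (span_except v i) (v i)) d -> m <= d.
Proof. by exists 0 => d [i ->]; apply: dist_ge0; apply: span_nonempty. Qed.

Lemma kuo_upper (n p : nat) (v : 'I_p -> vec n) (y : vec p) : (0 < p)%N ->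
  vnorm y = 1 -> kuo v <= sqrt (INR p) * vnorm (vcomb v y).
Proof.
move=> p0 Hy.
have Hp : 0 < INR p by apply: lt_0_INR; apply/ltP.
have [i Hi] : exists i, / INR p <= y i * y i.
  apply: NNPP => Hn.
  have : dot y y < \big[Rplus/0]_(i < p) (/ INR p).
    apply: sumR_lt => // i; apply: Rnot_le_lt => h; apply: Hn; by exists i.
  rewrite sumR_const -vnorm_sq Hy; have -> : INR p * / INR p = 1 by field; lra.
  lra.
have yi0 : y i <> 0 by move=> h; rewrite h in Hi; have := Rinv_0_lt_compat _ Hp; lra.
pose c j := (if j == i then 1 else 0) - y j / y i.
pose w k := \big[Rplus/0]_(j < p) (c j * v j k).
have Hw : span_except v i w.
  exists c; split; last by [].
  by rewrite /c eqxx; field.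
have Hd : forall k, vsub (v i) w k = / y i * vcomb v y k.
  move=> k; rewrite /vsub /w /vcomb.
  rewrite (sumR_ext (G := fun j => (if j == i then v j k else 0) - / y i * (y j * v j k))); last first.
    by move=> j; rewrite /c; case: (j == i); field.
  by rewrite sumR_sub sumR_delta sumR_scal; ring.
have Hinv : Rabs (/ y i) <= sqrt (INR p).
  rewrite -(sqrt_Rsqr (Rabs (/ y i))); last exact: Rabs_pos.
  apply: sqrt_le_1_alt; rewrite /Rsqr -Rabs_mult Rabs_pos_eq; last by nra.
  have h1 : 0 < y i * y i by nra.
  have -> : / y i * / y i = / (y i * y i) by field.
  have := Rinv_le_contravar _ _ (Rinv_0_lt_compat _ Hp) Hi; rewrite Rinv_inv; lra.
apply: Rle_trans (Rinf_le (y := dist_set (span_except v i) (v i)) _ (kuo_lb v)) _; first by exists i.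
apply: Rle_trans (dist_le _ Hw) _.
rewrite (vnorm_scal (c := / y i) (u := vcomb v y)) //.
apply: Rmult_le_compat_r; [apply: vnorm_ge0 | exact Hinv].
Qed.

Lemma kuo_lower (n p : nat) (v : 'I_p -> vec n) e : (0 < p)%N ->
  kuo v < e -> exists y : vec p, vnorm y = 1 /\ vnorm (vcomb v y) < e.
Proof.
case: p v => [//|p] v _ H.
have [d [[i ->] Hd]] := Rinf_approx (ex_intro _ _ (ex_intro _ ord0 erefl)) (kuo_lb v) H.
have [w [[c [ci Hc]] Hw]] := dist_approx (span_nonempty v i) Hd.
pose y' j := (if j == i then 1 else 0) - c j.
have Hy'1 : 1 <= vnorm y'.
  have := coord_le_norm y' i; rewrite /y' eqxx ci Rminus_0_r Rabs_R1; lra.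
have Hcomb : forall k, vcomb v y' k = vsub (v i) w k.
  move=> k; rewrite /vcomb /vsub Hc.
  rewrite (sumR_ext (G := fun j => (if j == i then v j k else 0) - c j * v j k)); last first.
    by move=> j; rewrite /y'; case: (j == i); ring.
  by rewrite sumR_sub sumR_delta.
have Hn0 : 0 < vnorm y' by lra.
exists (fun j => / vnorm y' * y' j); split.
  rewrite (vnorm_scal (c := / vnorm y') (u := y')) // Rabs_pos_eq; last by apply: Rlt_le; apply: Rinv_0_lt_compat.
  by field; lra.
rewrite (vnorm_scal (c := / vnorm y') (u := vcomb v y')); last first.
  by move=> k; rewrite /vcomb -sumR_scal; apply: sumR_ext => j; ring.
rewrite (vnorm_ext Hcomb) Rabs_pos_eq; last by apply: Rlt_le; apply: Rinv_0_lt_compat.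
have h1 : / vnorm y' <= 1 by rewrite -Rinv_1; apply: Rinv_le_contravar; lra.
have := vnorm_ge0 (vsub (v i) w); nra.
Qed.

Module GramPart.
Import mathcomp.algebra_tactics.lra mathcomp.algebra_tactics.ring.
Import GRing.Theory Num.Theory Order.TTheory.
Local Open Scope ring_scope.

Section Gram.
Implicit Types (k : nat).

Definition nsq k (u : 'rV[R]_k) : R := \sum_i u 0 i ^+ 2.

Lemma nsq_ge0 k (u : 'rV[R]_k) : 0 <= nsq u.
Proof. by apply: sumr_ge0 => i _; apply: sqr_ge0. Qed.

Lemma nsq_mx k (u : 'rV[R]_k) : nsq u = (u *m u^T) 0 0.
Proof. by rewrite mxE; apply: eq_bigr => i _; rewrite !mxE expr2. Qed.

Lemma CS_r k (u w : 'rV[R]_k) : ((u *m w^T) 0 0) ^+ 2 <= nsq u * nsq w.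
Proof.
have H := CS_sq (fun i => u 0 i) (fun i => w 0 i).
move/RleP: H.
have -> : (u *m w^T) 0 0 = dot (fun i => u 0 i) (fun i => w 0 i).
  by rewrite mxE; apply: eq_bigr => i _; rewrite !mxE.
have -> : nsq u = dot (fun i => u 0 i) (fun i => u 0 i).
  by apply: eq_bigr => i _; rewrite expr2.
have -> : nsq w = dot (fun i => w 0 i) (fun i => w 0 i).
  by apply: eq_bigr => i _; rewrite expr2.
by rewrite expr2.
Qed.

Lemma nsq_eq0 k (u : 'rV[R]_k) : nsq u = 0 -> u = 0.
Proof.
move=> H; apply/matrixP => i j; rewrite mxE (ord1 i).
have := psumr_eq0P (P := xpredT) (F := fun j => u 0 j ^+ 2) (fun j _ => sqr_ge0 _) H (i := j) erefl.
by move/eqP; rewrite sqrf_eq0 => /eqP.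
Qed.

Variables (p n : nat) (V : 'M[R]_(p, n)).
Let G := V *m V^T.
Definition qq := \det G / \tr (\adj G).

Lemma GT : G^T = G.
Proof. by rewrite /G trmx_mul trmxK. Qed.

Lemma quad_G (y : 'rV[R]_p) : (y *m G *m y^T) 0 0 = nsq (y *m V).
Proof. by rewrite nsq_mx trmx_mul /G !mulmxA. Qed.

Lemma nsq_row_mul m (L : 'M[R]_(m, n)) (y : 'rV[R]_m) :
  nsq (y *m L) <= nsq y * \tr (L *m L^T).
Proof.
rewrite /nsq.
have -> : \tr (L *m L^T) = \sum_k \sum_i L i k ^+ 2.
  rewrite /mxtrace exchange_big /=; apply: eq_bigr => i _; rewrite mxE.
  by apply: eq_bigr => k _; rewrite mxE expr2.
rewrite mulr_sumr; apply: ler_sum => k _.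
have := CS_r y (row k L^T).
have -> : (y *m (row k L^T)^T) 0 0 = (y *m L) 0 k.
  by rewrite !mxE; apply: eq_bigr => i _; rewrite !mxE.
have -> : nsq (row k L^T) = \sum_i L i k ^+ 2 by apply: eq_bigr => i _; rewrite !mxE.
by [].
Qed.

Lemma unitG : \det G != 0 -> G \in unitmx.
Proof. by move=> h; rewrite unitmxE unitfE. Qed.

Lemma HGid : \det G != 0 -> invmx G *m G = 1%:M.
Proof. by move=> h; apply: mulVmx; apply: unitG. Qed.

Lemma GHid : \det G != 0 -> G *m invmx G = 1%:M.
Proof. by move=> h; apply: mulmxV; apply: unitG. Qed.

Lemma HTsym : (invmx G)^T = invmx G.
Proof. by rewrite trmx_inv GT. Qed.

Lemma LLTH : \det G != 0 -> (invmx G *m V) *m (invmx G *m V)^T = invmx G.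
Proof.
move=> h.
by rewrite trmx_mul HTsym mulmxA -(mulmxA (invmx G) V) -/G HGid // mul1mx.
Qed.

Lemma qq_inv : \det G != 0 -> qq = (\tr (invmx G))^-1.
Proof.
move=> h.
have e : \adj G = \det G *: invmx G.
  by rewrite /invmx unitG // scalerA mulfV // scale1r.
by rewrite /qq -/G e mxtraceZ invfM mulrA mulfV // mul1r.
Qed.

Lemma nsq_rowL m (L : 'M[R]_(m, n)) j : nsq (row j L) = (L *m L^T) j j.
Proof. by rewrite mxE; apply: eq_bigr => k _; rewrite !mxE expr2. Qed.

Lemma trH_pos : \det G != 0 -> (0 < p)%N -> 0 < \tr (invmx G).
Proof.
move=> h p0.
set L := invmx G *m V.
have eT : \tr (invmx G) = \sum_j nsq (row j L).
  by rewrite -{1}(LLTH h) /mxtrace; apply: eq_bigr => j _; rewrite nsq_rowL.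
have T0 : 0 <= \tr (invmx G) by rewrite eT; apply: sumr_ge0 => j _; apply: nsq_ge0.
rewrite lt_def T0 andbT; apply/eqP => hT.
have L0 : L = 0.
  apply/row_matrixP => j; rewrite row0; apply: nsq_eq0.
  by apply: (psumr_eq0P (P := xpredT) (F := fun j => nsq (row j L)) (fun j _ => nsq_ge0 _)); rewrite -?eT.
have H0 : invmx G = 0 by rewrite -(LLTH h) -/L L0 mul0mx.
have := HGid h; rewrite H0 mul0mx => /matrixP /(_ (Ordinal p0) (Ordinal p0)).
by rewrite !mxE eqxx /=; move/eqP; rewrite eq_sym oner_eq0.
Qed.

Lemma gram_main_b : (0 < p)%N -> exists z : 'rV[R]_p, 0 < nsq z /\ nsq (z *m V) <= p%:R * qq * nsq z.
Proof.
move=> p0.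
have [d0|dn0] := eqVneq (\det G) 0.
  have d0' := d0; move/eqP: d0' => /det0P [z zn0 zG].
  exists z; split.
    rewrite lt_def nsq_ge0 andbT; apply/eqP => h; move/eqP: zn0; apply; exact: nsq_eq0.
  rewrite -quad_G -/G zG mul0mx mxE.
  by rewrite /qq -/G d0 !mul0r mulr0 mul0r.
set H := invmx G. set L := H *m V. set T := \tr H.
have Tp : 0 < T by apply: trH_pos.
have [j Hj] : exists j, T <= H j j * p%:R.
  apply: NNPP => hn.
  have hlt : forall j, H j j * p%:R < T.
    by move=> j; rewrite ltNge; apply/negP => hj; apply: hn; exists j.
  have hlt' : forall j, Rlt (H j j * p%:R) T by move=> j; apply/RltP.
  have := sumR_lt (F := fun j => H j j * p%:R) (G := fun _ => T) p0 hlt'.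
  move/RltP.
  have -> : \big[Rplus/0%R]_(i < p) (H i i * p%:R) = T * p%:R.
    by rewrite /T /mxtrace mulr_suml.
  have -> : \big[Rplus/0%R]_(i < p) T = T * p%:R.
    by rewrite -[LHS]/(\sum_(i < p) T) sumr_const card_ord mulr_natr.
  by rewrite ltxx.
have Hjj : H j j = nsq (row j L) by rewrite nsq_rowL LLTH.
have Hjj0 : 0 <= H j j by rewrite Hjj nsq_ge0.
exists (row j H).
have Nz : (H j j) ^+ 2 <= nsq (row j H).
  rewrite /nsq (bigD1 j) //= mxE lerDl; apply: sumr_ge0 => i _; apply: sqr_ge0.
have Hpos : 0 < H j j.
  rewrite lt_def Hjj0 andbT; apply/eqP => h0; move: Hj; rewrite h0 mul0r => h1.
  by move: Tp; rewrite ltNge h1.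
split; first by apply: lt_le_trans Nz; apply: exprn_gt0.
rewrite -row_mul -/L -Hjj qq_inv // -/H -/T.
set Ti := T^-1.
have TTi : T * Ti = 1 by rewrite mulfV // gt_eqF.
have Tip : 0 < Ti by rewrite invr_gt0.
rewrite expr2 in Nz.
have pp : 0 <= (p%:R : R) by apply: ler0n.
have a1 : 0 <= p%:R * Ti by apply: mulr_ge0 => //; apply: ltW.
have a2 : p%:R * Ti * (H j j * H j j) <= p%:R * Ti * nsq (row j H) by apply: ler_wpM2l.
have a4 : 0 <= Ti * H j j by apply: mulr_ge0 => //; apply: ltW.
have a3 : Ti * H j j * T <= Ti * H j j * (H j j * p%:R) by apply: ler_wpM2l.
have e1 : Ti * H j j * T = H j j.
  by rewrite mulrAC (mulrC Ti) TTi mul1r.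
have e2 : p%:R * Ti * (H j j * H j j) = Ti * H j j * (H j j * p%:R) by ring.
lra.
Qed.

Lemma gram_main_a (y : 'rV[R]_p) : qq * nsq y <= nsq (y *m V).
Proof.
have [d0|dn0] := eqVneq (\det G) 0.
  by rewrite /qq d0 mul0r mul0r; apply: nsq_ge0.
have hG : G \in unitmx by rewrite unitmxE unitfE.
set H := invmx G.
have HG : H *m G = 1%:M by apply: mulVmx.
have GH : G *m H = 1%:M by apply: mulmxV.
have HT : H^T = H by rewrite /H trmx_inv GT.
set L := H *m V.
have LLT : L *m L^T = H.
  by rewrite /L trmx_mul HT mulmxA -(mulmxA H V) -/G HG mul1mx.
have Hq : qq = (\tr H)^-1.
  have e : \adj G = \det G *: H.
    by rewrite /H /invmx hG scalerA mulfV // scale1r.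
  by rewrite /qq -/G e mxtraceZ invfM mulrA mulfV // mul1r.
set s := nsq y. set A := nsq (y *m V). set B := nsq (y *m L). set T := \tr H.
have hab : ((y *m V) *m (y *m L)^T) 0 0 = s.
  rewrite /s nsq_mx /L !trmx_mul HT !mulmxA.
  by rewrite -(mulmxA y V) -/G -(mulmxA y G) GH mulmx1.
have CSab := CS_r (y *m V) (y *m L); rewrite hab -/A -/B in CSab.
have HB : B <= s * T by have := nsq_row_mul L y; rewrite LLT.
have s0 : 0 <= s by apply: nsq_ge0.
have A0 : 0 <= A by apply: nsq_ge0.
rewrite Hq.
have [->|sp] := eqVneq s 0; first by rewrite mulr0.
have s_pos : 0 < s by rewrite lt_def sp s0.
have h1 : s * s <= A * (s * T) by rewrite expr2 in CSab; nra.
have h2 : s <= A * T by nra.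
have T_pos : 0 < T by nra.
by rewrite ler_pdivrMl // mulrC.
Qed.
End Gram.


Lemma det_bridge k (A : 'I_k -> 'I_k -> R) : det A = \det (\matrix_(i, j) A i j).
Proof.
rewrite /det /determinant; apply: eq_bigr => s _.
have -> : \prod_i (\matrix_(i, j) A i j) i (s i) = \big[Rmult/1%R]_(i < k) A i (s i).
  by apply: eq_bigr => i _; rewrite mxE.
by case: (odd_perm s); rewrite /= ?expr1 ?expr0.
Qed.

Definition Vmx (n p : nat) (v : 'I_p -> vec n) : 'M[R]_(p, n) := \matrix_(i, m) v i m.

Lemma gram_bridge (n p : nat) (v : 'I_p -> vec n) :
  gram v = \det (Vmx v *m (Vmx v)^T).
Proof.
rewrite /gram det_bridge; congr (\det _); apply/matrixP => i j; rewrite !mxE.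
by apply: eq_bigr => m _; rewrite !mxE.
Qed.

Lemma gram_minor_bridge (n p : nat) (v : 'I_p -> vec n) (j : 'I_p) :
  gram (fun i : 'I_p.-1 => v (lift j i)) = \adj (Vmx v *m (Vmx v)^T) j j.
Proof.
rewrite /gram det_bridge mxE /cofactor.
rewrite exprD -exprMn mulrNN mulr1 expr1n mul1r.
congr (\det _); apply/matrixP => a b; rewrite !mxE.
by apply: eq_bigr => m _; rewrite !mxE.
Qed.

Lemma gram_quot_bridge (n p : nat) (F : vec n -> vec p) x :
  gram_quot F x = qq (Vmx (fun i : 'I_p => grad (Defs.comp F i) x)).
Proof.
rewrite /gram_quot /qq gram_bridge RdivE; congr (_ / _).
by rewrite /mxtrace; apply: eq_bigr => j _; rewrite (gram_minor_bridge (fun i => grad (Defs.comp F i) x)).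
Qed.

Definition rowv (p : nat) (y : vec p) : 'rV[R]_p := \row_i y i.

Lemma vcomb_bridge (n p : nat) (v : 'I_p -> vec n) (y : vec p) :
  Rmult (vnorm (vcomb v y)) (vnorm (vcomb v y)) = nsq (rowv y *m Vmx v).
Proof.
rewrite vnorm_sq /dot /vsum /nsq; apply: eq_bigr => m _.
rewrite expr2 !mxE /vcomb; congr (_ * _); apply: eq_bigr => i _; by rewrite !mxE.
Qed.

Lemma rowv_bridge (p : nat) (y : vec p) : Rmult (vnorm y) (vnorm y) = nsq (rowv y).
Proof. by rewrite vnorm_sq /dot /vsum /nsq; apply: eq_bigr => m _; rewrite expr2 !mxE. Qed.

End GramPart.
Import GramPart.
Module GramPart2.
Import GRing.Theory Num.Theory Order.TTheory.
Local Close Scope R_scope.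

Lemma gq_upper (n p : nat) (F : vec n -> vec p) x (y : vec p) :
  vnorm y = R1 ->
  Rle (sqrt (gram_quot F x)) (vnorm (dstar F x y)).
Proof.
move=> Hy.
set v := fun i : 'I_p => grad (Defs.comp F i) x.
have h := gram_main_a (Vmx v) (rowv y).
rewrite -rowv_bridge -vcomb_bridge Hy -gram_quot_bridge in h.
have h2 : Rle (Rmult (gram_quot F x) (Rmult R1 R1)) (Rmult (vnorm (dstar F x y)) (vnorm (dstar F x y))).
  by apply/RleP; exact: h.
rewrite !Rmult_1_r in h2.
rewrite -[vnorm _]sqrt_square; last exact: vnorm_ge0.
by apply: sqrt_le_1_alt.
Qed.

Lemma gq_lower (n p : nat) (F : vec n -> vec p) x : (0 < p)%N ->
  exists y : vec p, vnorm y = R1 /\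
    Rle (vnorm (dstar F x y)) (Rmult (sqrt (INR p)) (sqrt (gram_quot F x))).
Proof.
move=> p0.
set v := fun i : 'I_p => grad (Defs.comp F i) x.
have [z [hz1 hz2]] := gram_main_b (Vmx v) p0.
set y0 : vec p := fun i => z ord0 i.
have ez : z = rowv y0 by apply/matrixP => i j; rewrite !mxE (ord1 i).
rewrite ez -rowv_bridge -vcomb_bridge -gram_quot_bridge in hz1 hz2.
set N := vnorm y0 in hz1 hz2.
set q := gram_quot F x in hz2 *.
set W := vnorm (vcomb v y0) in hz2.
have h1 : Rlt 0 (Rmult N N) by apply/RltP.
have h2 : Rle (Rmult W W) (Rmult (Rmult (INR p) q) (Rmult N N)) by apply/RleP; rewrite INRE.
have N0 : Rle 0 N by apply: vnorm_ge0.
have Np : Rlt 0 N by nra.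
have Hp : Rlt 0 (INR p) by apply: lt_0_INR; apply/ssrnat.ltP.
have W0 : Rle 0 W by apply: vnorm_ge0.
have q0 : Rle 0 q.
  apply: Rnot_lt_le => hq.
  have : Rlt (Rmult (INR p) q) 0 by nra.
  nra.
exists (fun i => Rmult (Rinv N) (y0 i)); split.
  rewrite (vnorm_scal (c := Rinv N) (u := y0)) // Rabs_pos_eq; last by apply: Rlt_le; apply: Rinv_0_lt_compat.
  by rewrite -/N; field; lra.
rewrite (vnorm_scal (c := Rinv N) (u := vcomb v y0)); last first.
  move=> k; rewrite /vcomb -sumR_scal; apply: sumR_ext => j; rewrite /=.
  by rewrite /v; ring.
rewrite -/W Rabs_pos_eq; last by apply: Rlt_le; apply: Rinv_0_lt_compat.
rewrite -sqrt_mult; [|lra|lra].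
have hW : Rle (Rmult (Rinv N) W) (sqrt (Rmult (Rmult (INR p) q) (Rmult N N)) * Rinv N)%R.
  rewrite Rmult_comm; apply: Rmult_le_compat_r; first by apply: Rlt_le; apply: Rinv_0_lt_compat.
  rewrite -[W]sqrt_square //; apply: sqrt_le_1_alt; exact: h2.
apply: Rle_trans hW _.
rewrite sqrt_mult; [|nra|nra]. rewrite sqrt_square //.
apply: Req_le; change (Rmult (Rmult (sqrt (Rmult (INR p) q)) N) (Rinv N) = sqrt (Rmult (INR p) q)); rewrite Rmult_assoc Rinv_r ?Rmult_1_r //; lra.
Qed.

End GramPart2.
Import GramPart2.

Section Taylor.
Variable n : nat.
Implicit Types (y z w u : vec n).

Definition box y z w := forall j, (y j <= w j <= z j) \/ (z j <= w j <= y j).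

Lemma box_r y z : box y z z.
Proof. by move=> j; case: (Rle_dec (y j) (z j)) => h; [left|right]; lra. Qed.

Lemma box_trans y z w u : box y z w -> box y w u -> box y z u.
Proof. by move=> h1 h2 j; case: (h1 j); case: (h2 j) => *; (left; lra) || (right; lra) || lra. Qed.

Lemma box_norm y z w : box y z w -> vnorm (vsub w y) <= vnorm (vsub z y).
Proof.
move=> h; apply: sqrt_le_1_alt; apply: sumR_le => j; rewrite /vsub.
by case: (h j) => *; nra.
Qed.

Lemma box_normsq y z w : box y z w -> vnorm w * vnorm w <= vnorm y * vnorm y + vnorm z * vnorm z.
Proof.
move=> h; rewrite !vnorm_sq /dot /vsum -sumR_split; apply: sumR_le => j /=.
by case: (h j) => *; case: (Rle_dec 0 (w j)) => *; nra.
Qed.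

Lemma shift_shift w i t s : shift (shift w i t) i s = shift w i (t + s).
Proof. by apply: functional_extensionality => j; rewrite /shift; case: (j == i); ring. Qed.

Lemma shift0 w i : shift w i 0 = w.
Proof. by apply: functional_extensionality => j; rewrite /shift; case: (j == i); ring. Qed.

Lemma partial_spec (h : vec n -> R) i w :
  (exists d, derivable_pt_lim (fun s => h (shift w i s)) 0 d) ->
  derivable_pt_lim (fun s => h (shift w i s)) 0 (partial h i w).
Proof. move=> [d hd]; rewrite /partial; apply: (epsilon_spec (inhabits 0) (fun l => derivable_pt_lim (fun s => h (shift w i s)) 0 l)); by exists d. Qed.

Lemma deriv_translate (phi : R -> R) t d :
  derivable_pt_lim (fun s => phi (t + s)) 0 d -> derivable_pt_lim phi t d.
Proof.
move=> H eps heps; have [del hdel] := H eps heps; exists del => h0 h0n h0d.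
have := hdel h0 h0n h0d; by rewrite Rplus_0_r Rplus_0_l.
Qed.

Lemma mvt_box (phi : vec n -> R) (phi' : 'I_n -> vec n -> R) y z B :
  0 <= B ->
  (forall k w, box y z w -> derivable_pt_lim (fun s => phi (shift w k s)) 0 (phi' k w)) ->
  (forall k w, box y z w -> Rabs (phi' k w) <= B) ->
  Rabs (phi z - phi y) <= INR n * B * vnorm (vsub z y).
Proof.
move=> B0 Hd Hb.
pose P (m : nat) : vec n := fun j => if (j < m)%N then z j else y j.
have P0 : P 0%N = y by apply: functional_extensionality => j.
have Pn : P n = z by apply: functional_extensionality => j; rewrite /P ltn_ord.
have Hz0 := vnorm_ge0 (vsub z y).
suff : forall m, (m <= n)%N -> Rabs (phi (P m) - phi y) <= INR m * B * vnorm (vsub z y).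
  by move=> H; have := H n (leqnn n); rewrite Pn.
elim=> [|m IH] hm.
  by rewrite P0 Rminus_eq_0 Rabs_R0 /=; lra.
have hm' : (m < n)%N by [].
pose kk := Ordinal hm'.
set T := z kk - y kk.
have PS : P m.+1 = shift (P m) kk T.
  apply: functional_extensionality => j; rewrite /P /shift /T ltnS.
  have ejk : (j == kk) = (nat_of_ord j == m) by [].
  rewrite ejk.
  case: (ltngtP j m) => hj /=; try ring.
  have -> : kk = j by apply: val_inj.
  ring.
have Hbox : forall c, Rmin 0 T <= c <= Rmax 0 T -> box y z (shift (P m) kk c).
  move=> c hc j; rewrite /shift /P.
  case: (eqVneq j kk) => [->|hj].
    have -> : (kk < m)%N = false by rewrite /= ltnn.
    move: hc; rewrite /Rmin /Rmax; case: (Rle_dec 0 T) => h1 h2; rewrite /T in h1 h2; [left|right]; lra.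
  case: (j < m)%N; rewrite Rplus_0_r; case: (Rle_dec (y j) (z j)) => h3; try (left; lra); right; lra.
have Hleg : Rabs (phi (P m.+1) - phi (P m)) <= B * vnorm (vsub z y).
  have [c [hc1 hc2]] := MVT_abs (fun s => phi (shift (P m) kk s)) (fun s => phi' kk (shift (P m) kk s)) 0 T
    (fun c hc => deriv_translate (eq_ind_r (fun f => derivable_pt_lim f 0 _) (Hd kk _ (Hbox c hc))
         (functional_extensionality _ _ (fun s => f_equal phi (esym (shift_shift (P m) kk c s)))))).
  rewrite PS -{2}(shift0 (P m) kk) hc1.
  apply: Rmult_le_compat; [apply: Rabs_pos|apply: Rabs_pos| exact: Hb _ _ (Hbox c hc2)|].
  rewrite Rminus_0_r /T; have := coord_le_norm (vsub z y) kk; by rewrite /vsub.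
have := Rabs_triang (phi (P m.+1) - phi (P m)) (phi (P m) - phi y).
have -> : phi (P m.+1) - phi (P m) + (phi (P m) - phi y) = phi (P m.+1) - phi y by ring.
have := IH (ltnW hm); rewrite S_INR; move=> *; nra.
Qed.

Definition Dd (A B : vec n -> R) (L : seq 'I_n) (w : vec n) := dpart L A w - dpart L B w.

Lemma taylor_box (A B : vec n -> R) y z (N : nat) M :
  0 <= M ->
  (forall L, (size L < N)%N -> Dd A B L y = 0) ->
  (forall L w, size L = N -> box y z w -> Rabs (Dd A B L w) <= M) ->
  (forall L k w, (size L < N)%N -> box y z w ->
     (exists d : R, derivable_pt_lim (fun s => dpart L A (shift w k s)) 0 d) /\
     (exists d : R, derivable_pt_lim (fun s => dpart L B (shift w k s)) 0 d)) ->
  forall m L, (size L + m)%N = N -> forall w, box y z w ->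
    Rabs (Dd A B L w) <= (INR n * vnorm (vsub z y)) ^ m * M.
Proof.
move=> M0 Hz HM Hder.
have Hn0 : 0 <= INR n * vnorm (vsub z y) by apply: Rmult_le_pos; [apply: pos_INR|apply: vnorm_ge0].
elim=> [|m IH] L hL w hw.
  by rewrite addn0 in hL; rewrite /= Rmult_1_l; apply: HM.
have hLN : (size L < N)%N by rewrite -hL addnS ltnS leq_addr.
have hB0 : 0 <= (INR n * vnorm (vsub z y)) ^ m * M by apply: Rmult_le_pos => //; apply: pow_le.
have Hd' : forall k u, box y w u ->
    derivable_pt_lim (fun s => Dd A B L (shift u k s)) 0 (Dd A B (k :: L) u).
  move=> k u hu; have hu' := box_trans hw hu.
  have [hA hB] := Hder L k u hLN hu'.
  exact: (derivable_pt_lim_minus _ _ _ _ _ (partial_spec hA) (partial_spec hB)).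
have Hb' : forall k u, box y w u -> Rabs (Dd A B (k :: L) u) <= (INR n * vnorm (vsub z y)) ^ m * M.
  move=> k u hu; apply: IH; last exact: box_trans hw hu.
  by rewrite /= -hL addSn addnS.
have H := mvt_box hB0 Hd' Hb'.
rewrite Hz // Rminus_0_r in H.
apply: Rle_trans H _.
have := box_norm hw; have := pos_INR n; have := vnorm_ge0 (vsub w y); rewrite /=; move=> *.
have -> : INR n * vnorm (vsub z y) * (INR n * vnorm (vsub z y)) ^ m * M =
          INR n * ((INR n * vnorm (vsub z y)) ^ m * M) * vnorm (vsub z y) by ring.
apply: Rmult_le_compat_l => //; apply: Rmult_le_pos => //.
Qed.
End Taylor.


Lemma vnorm_zero (n : nat) : vnorm (@vzero n) = 0.
Proof.
rewrite /vnorm /dot /vsum big1 ?sqrt_0 // => i _; rewrite /vzero; ring.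
Qed.

Lemma fin_unif (n : nat) (T : finType) (Q : T -> vec n -> R) :
  (forall t, exists M del, 0 < del /\ forall w, vnorm w < del -> Rabs (Q t w) <= M) ->
  exists M del, 0 < del /\ 0 <= M /\ forall t w, vnorm w < del -> Rabs (Q t w) <= M.
Proof.
move=> H.
suff : forall s : seq T, exists M del, 0 < del /\ 0 <= M /\
    forall t w, t \in s -> vnorm w < del -> Rabs (Q t w) <= M.
  move=> /(_ (enum T)) [M [del [h1 [h2 h3]]]]; exists M, del; split => //; split => // t w hw.
  by apply: h3 => //; rewrite mem_enum.
elim=> [|a s [M [del [h1 [h2 h3]]]]].
  by exists 0, 1; split; [lra|split; [lra|]].
have [Ma [dela [ha1 ha2]]] := H a.
exists (Rmax M Ma), (Rmin del dela); split; first by apply: Rmin_glb_lt.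
split; first by apply: Rle_trans h2 (Rmax_l _ _).
move=> t w; rewrite in_cons => /orP [/eqP ->|ht] hw.
  apply: Rle_trans (Rmax_r _ _); apply: ha2; apply: Rlt_le_trans hw (Rmin_r _ _).
apply: Rle_trans (Rmax_l _ _); apply: h3 => //; apply: Rlt_le_trans hw (Rmin_l _ _).
Qed.

Lemma Ck_local_bound (n s : nat) rho (h : vec n -> R) (L : seq 'I_n) :
  0 < rho -> Ck_on s (ball0 rho) h -> (size L <= s)%N ->
  exists M del, 0 < del /\ forall w, vnorm w < del -> Rabs (dpart L h w) <= M.
Proof.
move=> hr [Hc _] hL.
have h0 : ball0 rho (@vzero n) by rewrite /ball0 vnorm_zero.
have [del [hd Hd]] := Hc L hL _ h0 1 Rlt_0_1.
exists (Rabs (dpart L h vzero) + 1), (Rmin del rho); split; first by apply: Rmin_glb_lt.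
move=> w hw.
have hw1 : ball0 rho w by rewrite /ball0; apply: Rlt_le_trans hw (Rmin_r _ _).
have := Hd w hw1; rewrite vnorm_vsub0 => /(_ (Rlt_le_trans _ _ _ hw (Rmin_l _ _))) hh.
have := Rabs_triang_inv (dpart L h w) (dpart L h vzero); lra.
Qed.

Lemma sq_lt_lt (a b : R) : 0 <= a -> 0 <= b -> a * a < b * b -> a < b.
Proof. move=> *; nra. Qed.

Lemma grad_diff_bound (n p r : nat) (Sigma : vec n -> Prop) (f g : vec n -> vec p) :
  Sigma (@vzero n) -> Egerm (r + 1) f -> Egerm (r + 1) g -> jet_eq Sigma r f g ->
  exists C rho, 0 <= C /\ 0 < rho /\ forall x, vnorm x <= rho -> 0 < dist_set Sigma x ->
   forall y : vec p, vnorm y = 1 ->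
   vnorm (vsub (dstar g x y) (dstar f x y)) <= C * dist_set Sigma x ^ r.
Proof.
move=> S0 [_ [rf [hrf Hf]]] [_ [rg [hrg Hg]]] [rj [hrj Hj]].
pose Q (t : 'I_p * (r + 1).-tuple 'I_n) w := Dd (Defs.comp g t.1) (Defs.comp f t.1) (tval t.2) w.
have HQ : forall t, exists M del, 0 < del /\ forall w, vnorm w < del -> Rabs (Q t w) <= M.
  case=> k t.
  have hs : (size (tval t) <= r + 1)%N by rewrite size_tuple.
  have [Mg [dg [hdg Hbg]]] := Ck_local_bound (L := tval t) hrg (Hg k) hs.
  have [Mf [df [hdf Hbf]]] := Ck_local_bound (L := tval t) hrf (Hf k) hs.
  exists (Mg + Mf), (Rmin dg df); split; first by apply: Rmin_glb_lt.
  move=> w hw; rewrite /Q /Dd /=.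
  have := Hbg w (Rlt_le_trans _ _ _ hw (Rmin_l _ _)).
  have := Hbf w (Rlt_le_trans _ _ _ hw (Rmin_r _ _)).
  have := Rabs_triang (dpart (tval t) (Defs.comp g k) w) (- dpart (tval t) (Defs.comp f k) w).
  rewrite Rabs_Ropp; rewrite /Rminus; lra.
have [M [del [hdel [hM HM]]]] := fin_unif HQ.
set m0 := Rmin (Rmin rf rg) (Rmin rj del).
have hm0 : 0 < m0 by apply: Rmin_glb_lt; apply: Rmin_glb_lt.
have m0f : m0 <= rf by apply: Rle_trans (Rmin_l _ _) (Rmin_l _ _).
have m0g : m0 <= rg by apply: Rle_trans (Rmin_l _ _) (Rmin_r _ _).
have m0j : m0 <= rj by apply: Rle_trans (Rmin_r _ _) (Rmin_l _ _).
have m0d : m0 <= del by apply: Rle_trans (Rmin_r _ _) (Rmin_r _ _).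
have hn0 := pos_INR n; have hp0 := pos_INR p.
exists (sqrt (INR n) * (INR p * ((2 * INR n) ^ r * M))), (m0 / 4); split.
  apply: Rmult_le_pos; [apply: sqrt_pos|]; apply: Rmult_le_pos => //.
  by apply: Rmult_le_pos => //; apply: pow_le; lra.
split; first lra.
move=> x hx dpos y hy.
set d := dist_set Sigma x in dpos *.
have hdx : d <= vnorm x by rewrite -vnorm_vsub0; apply: dist_le.
have [z [Sz hz]] : exists z, Sigma z /\ vnorm (vsub x z) < 2 * d.
  apply: dist_approx; first by exists vzero.
  rewrite -/d; lra.
have hzn : vnorm z <= 3 * vnorm x.
  have := vnorm_tri_sub z x; rewrite vsub_sym; lra.
have hxn := vnorm_ge0 x.
have Hbox : forall w, box z x w -> vnorm w < m0.
  move=> w hw; apply: sq_lt_lt; [apply: vnorm_ge0|lra|].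
  have := box_normsq hw; have := vnorm_ge0 z; nra.
have Hcomp : forall (i : 'I_p) (k : 'I_n),
    Rabs (grad (Defs.comp g i) x k - grad (Defs.comp f i) x k) <= (2 * INR n) ^ r * d ^ r * M.
  move=> i k.
  have Hz0 : forall L, (size L < r + 1)%N -> Dd (Defs.comp g i) (Defs.comp f i) L z = 0.
    move=> L hL; rewrite /Dd (Hj z Sz _ i L); first ring.
      by apply: Rle_lt_trans hzn _; lra.
    by rewrite addn1 ltnS in hL.
  have HMb : forall L w, size L = (r + 1)%N -> box z x w ->
      Rabs (Dd (Defs.comp g i) (Defs.comp f i) L w) <= M.
    move=> L w hL hw.
    have hL' : size L == (r + 1)%N by apply/eqP.
    exact: (HM (i, Tuple hL') w (Rlt_le_trans _ _ _ (Hbox w hw) m0d)).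
  have Hder : forall L k w, (size L < r + 1)%N -> box z x w ->
     (exists d : R, derivable_pt_lim (fun s => dpart L (Defs.comp g i) (shift w k s)) 0 d) /\
     (exists d : R, derivable_pt_lim (fun s => dpart L (Defs.comp f i) (shift w k s)) 0 d).
    move=> L k' w hL hw; have hw' := Hbox w hw; split.
      by apply: (proj2 (Hg i)) => //; rewrite /ball0; lra.
    by apply: (proj2 (Hf i)) => //; rewrite /ball0; lra.
  have T := taylor_box hM Hz0 HMb Hder (m := r) (L := [:: k]) (esym (addnC _ _)) (box_r z x).
  apply: Rle_trans T _.
  rewrite -Rpow_mult_distr; apply: Rmult_le_compat_r => //; apply: pow_incr; split.
    by apply: Rmult_le_pos => //; apply: vnorm_ge0.
  have := vnorm_ge0 (vsub x z); nra.
set E := (2 * INR n) ^ r * d ^ r * M.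
have HE : 0 <= E by rewrite /E; apply: Rmult_le_pos => //; apply: Rmult_le_pos; apply: pow_le; lra.
have : vnorm (vsub (dstar g x y) (dstar f x y)) <= sqrt (INR n) * (INR p * E).
  apply: norm_le_const => m; rewrite /vsub /dstar -sumR_sub.
  apply: Rle_trans (sumR_abs _) _; rewrite -sumR_const; apply: sumR_le => i.
  rewrite -Rmult_minus_distr_l Rabs_mult.
  have := coord_le_norm y i; rewrite hy => hyi.
  have hc := Hcomp i m; rewrite -/E in hc.
  have := Rabs_pos (y i); have := Rabs_pos (grad (Defs.comp g i) x m - grad (Defs.comp f i) x m).
  nra.
rewrite /E; move=> H; apply: Rle_trans H _; right; ring.
Qed.


Lemma rpow_ge0 d a : 0 <= rpow d a.
Proof. rewrite /rpow; case: (Rlt_dec 0 d) => h /=; [apply: Rlt_le; apply: exp_pos | lra]. Qed.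

Lemma rpow_pos d a : 0 < d -> rpow d a = Rpower d a.
Proof. by rewrite /rpow; case: (Rlt_dec 0 d). Qed.

Lemma rpow_nonpos d a : ~ 0 < d -> rpow d a = 0.
Proof. by rewrite /rpow; case: (Rlt_dec 0 d). Qed.

Lemma le_eps (A B c : R) : 0 <= c -> (forall eps, 0 < eps -> A <= B + c * eps) -> A <= B.
Proof.
move=> hc H; apply: Rnot_lt_le => hlt.
have he : 0 < (A - B) / (2 * (c + 1)) by apply: Rdiv_lt_0_compat; lra.
have := H _ he.
have : c * ((A - B) / (2 * (c + 1))) < A - B.
  have -> : c * ((A - B) / (2 * (c + 1))) = (A - B) * (c / (2 * (c + 1))) by field; lra.
  have : c / (2 * (c + 1)) < 1.
    apply: (Rmult_lt_reg_r (2 * (c + 1))); first lra.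
    rewrite /Rdiv Rmult_assoc Rinv_l; lra.
  move=> h; nra.
lra.
Qed.

Lemma pow_split d r δ : 0 < d -> d ^ (r + 1) = Rpower d (INR r + 1 - δ) * Rpower d δ.
Proof.
move=> hd; rewrite -Rpower_plus -Rpower_pow //.
by rewrite addn1 S_INR; congr (Rpower d _); ring.
Qed.

Section Transfer.
Variables (n p r : nat) (D : vec n -> R) (U V : vec n -> vec p -> R).

Lemma transfer δ C ρ1 :
  0 < δ -> 0 <= C -> 0 < ρ1 -> (forall x, 0 <= D x <= vnorm x) -> (forall x y, 0 <= V x y) ->
  (forall x y, vnorm x <= ρ1 -> 0 < D x -> vnorm y = 1 -> U x y <= V x y + D x * (C * D x ^ r)) ->
  gtrsim_sphere U (fun x _ => rpow (D x) (INR r + 1 - δ)) ->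
  gtrsim_sphere V (fun x _ => rpow (D x) (INR r + 1 - δ)).
Proof.
move=> hδ hC hρ1 HD HV HUV [K [hK [ρ [hρ H]]]].
set c := / (2 * K * C + 1).
have hc : 0 < c by apply: Rinv_0_lt_compat; nra.
set t := Rpower c (/ δ).
have ht : 0 < t by apply: exp_pos.
have htd : Rpower t δ = c by rewrite /t Rpower_mult Rinv_l ?Rpower_1 //; lra.
exists (2 * K); split; first lra.
exists (Rmin ρ (Rmin ρ1 t)); split; first by apply: Rmin_glb_lt => //; apply: Rmin_glb_lt.
move=> x y hx hy.
have hxρ : vnorm x <= ρ by apply: Rle_trans hx (Rmin_l _ _).
have hxρ1 : vnorm x <= ρ1 by apply: Rle_trans hx (Rle_trans _ _ _ (Rmin_r _ _) (Rmin_l _ _)).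
have hxt : vnorm x <= t by apply: Rle_trans hx (Rle_trans _ _ _ (Rmin_r _ _) (Rmin_r _ _)).
have := HV x y; have := HD x; move=> [hD0 hDx] hV0.
case: (Rlt_dec 0 (D x)) => hDp; last first.
  by rewrite rpow_nonpos //; nra.
have h1 := H x y hxρ hy; have h2 := HUV x y hxρ1 hDp hy.
rewrite rpow_pos // in h1 *.
set P := Rpower (D x) (INR r + 1 - δ) in h1 *.
have hP : 0 < P by apply: exp_pos.
have hDδ : Rpower (D x) δ <= c.
  rewrite -htd; apply: Rle_Rpower_l; lra.
have hpow : D x * (C * D x ^ r) = C * (P * Rpower (D x) δ).
  by rewrite -pow_split // pow_add pow_1; ring.
rewrite hpow in h2.
have hKC : K * (C * (P * Rpower (D x) δ)) <= P / 2.
  have : K * C * Rpower (D x) δ <= K * C * c.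
    apply: Rmult_le_compat_l => //; nra.
  have : K * C * c <= / 2.
    rewrite /c; apply: (Rmult_le_reg_r (2 * K * C + 1)); first nra.
    rewrite Rmult_assoc Rinv_l; nra.
  move=> *; have : 0 < Rpower (D x) δ by apply: exp_pos.
  nra.
nra.
Qed.
End Transfer.


Section PerG.
Variables (n p r : nat) (Sigma : vec n -> Prop) (f g : vec n -> vec p).
Hypothesis S0 : Sigma (@vzero n).
Hypothesis hp : (1 <= p)%N.

Let D := dist_set Sigma.
Let rp δ x := rpow (D x) (INR r + 1 - δ).

Lemma HD x : 0 <= D x <= vnorm x.
Proof.
split; first by apply: dist_ge0; exists vzero.
by rewrite -vnorm_vsub0; apply: dist_le.
Qed.

Lemma sqrtp1 : 1 <= sqrt (INR p).
Proof.
rewrite -sqrt_1; apply: sqrt_le_1_alt.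
have : (1 <= p)%coq_nat by apply/ssrnat.leP.
move=> h; have := le_INR _ _ h; rewrite /=; lra.
Qed.

Lemma E14 : (exists δ, 0 < δ /\ gtrsim (fun x => D x * kuo_df f x + vnorm (g x)) (rp δ)) <->
            (exists δ, 0 < δ /\ gtrsim_sphere (fun x y => D x * vnorm (dstar f x y) + vnorm (g x))
                                              (fun x _ => rp δ x)).
Proof.
have hs := sqrtp1.
split.
  move=> [δ [hδ [K [hK [ρ [hρ H]]]]]]; exists δ; split => //.
  exists (K * sqrt (INR p)); split; first nra.
  exists ρ; split => // x y hx hy.
  have h1 := H x hx.
  have h2 : kuo_df f x <= sqrt (INR p) * vnorm (dstar f x y).
    exact: (kuo_upper (fun i => grad (Defs.comp f i) x) hp hy).
  have [hD0 _] := HD x; have hg0 := vnorm_ge0 (g x); have hf0 := vnorm_ge0 (dstar f x y).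
  have a1 : D x * kuo_df f x <= D x * (sqrt (INR p) * vnorm (dstar f x y)) by apply: Rmult_le_compat_l.
  have a2 : vnorm (g x) <= sqrt (INR p) * vnorm (g x) by nra.
  apply: Rle_trans h1 _.
  have -> : K * sqrt (INR p) * (D x * vnorm (dstar f x y) + vnorm (g x)) =
     K * (D x * (sqrt (INR p) * vnorm (dstar f x y)) + sqrt (INR p) * vnorm (g x)) by ring.
  apply: Rmult_le_compat_l; lra.
move=> [δ [hδ [K [hK [ρ [hρ H]]]]]]; exists δ; split => //.
exists K; split => //; exists ρ; split => // x hx.
have := HD x; move=> [hD0 _].
apply: (le_eps (c := K * D x)); first nra.
move=> eps heps.
have [y [hy hyl]] : exists y : vec p, vnorm y = 1 /\ vnorm (dstar f x y) < kuo_df f x + eps.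
  have hk : kuo (fun i => grad (Defs.comp f i) x) < kuo_df f x + eps by rewrite /kuo_df; lra.
  have [y [hy1 hy2]] := kuo_lower hp hk.
  by exists y.
have h1 := H x y hx hy.
have hg0 := vnorm_ge0 (g x).
apply: Rle_trans h1 _.
have : D x * vnorm (dstar f x y) <= D x * (kuo_df f x + eps) by apply: Rmult_le_compat_l => //; lra.
move=> h; have : K * (D x * vnorm (dstar f x y) + vnorm (g x)) <= K * (D x * (kuo_df f x + eps) + vnorm (g x)).
  apply: Rmult_le_compat_l; lra.
move=> h'; apply: Rle_trans h' _; right; ring.
Qed.
Lemma E23 : (exists δ, 0 < δ /\ gtrsim (fun x => D x * sqrt (gram_quot g x) + vnorm (g x)) (rp δ)) <->
            (exists δ, 0 < δ /\ gtrsim_sphere (fun x y => D x * vnorm (dstar g x y) + vnorm (g x))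
                                              (fun x _ => rp δ x)).
Proof.
have hs := sqrtp1.
split.
  move=> [δ [hδ [K [hK [ρ [hρ H]]]]]]; exists δ; split => //.
  exists K; split => //; exists ρ; split => // x y hx hy.
  have h1 := H x hx.
  have h2 : sqrt (gram_quot g x) <= vnorm (dstar g x y) by apply: gq_upper.
  have [hD0 _] := HD x.
  apply: Rle_trans h1 _; apply: Rmult_le_compat_l; first lra.
  have := Rmult_le_compat_l _ _ _ hD0 h2; lra.
move=> [δ [hδ [K [hK [ρ [hρ H]]]]]]; exists δ; split => //.
exists (K * sqrt (INR p)); split; first nra.
exists ρ; split => // x hx.
have [y [hy h2]] := gq_lower g x hp.
have h1 := H x y hx hy.
have [hD0 _] := HD x.
have hq := sqrt_pos (gram_quot g x); have hg0 := vnorm_ge0 (g x).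
apply: Rle_trans h1 _.
have a1 : D x * vnorm (dstar g x y) <= D x * (sqrt (INR p) * sqrt (gram_quot g x)) by apply: Rmult_le_compat_l.
have a2 : vnorm (g x) <= sqrt (INR p) * vnorm (g x) by nra.
have -> : K * sqrt (INR p) * (D x * sqrt (gram_quot g x) + vnorm (g x)) =
     K * (D x * (sqrt (INR p) * sqrt (gram_quot g x)) + sqrt (INR p) * vnorm (g x)) by ring.
apply: Rmult_le_compat_l; lra.
Qed.

Lemma E34 : Egerm (r + 1) f -> Egerm (r + 1) g -> jet_eq Sigma r f g ->
  (exists δ, 0 < δ /\ gtrsim_sphere (fun x y => D x * vnorm (dstar g x y) + vnorm (g x))
                                    (fun x _ => rp δ x)) <->
  (exists δ, 0 < δ /\ gtrsim_sphere (fun x y => D x * vnorm (dstar f x y) + vnorm (g x))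
                                    (fun x _ => rp δ x)).
Proof.
move=> hf hg hj.
have [C [ρ1 [hC [hρ1 HC]]]] := grad_diff_bound S0 hf hg hj.
split.
  move=> [δ [hδ H]]; exists δ; split => //.
  apply: (transfer hδ hC hρ1 HD _ _ H).
    by move=> x y; have := HD x; have := vnorm_ge0 (g x); have := vnorm_ge0 (dstar f x y); nra.
  move=> x y hx hDp hy.
  have h1 : vnorm (vsub (dstar g x y) (dstar f x y)) <= C * D x ^ r by exact: HC.
  have h2 := vnorm_tri_sub (dstar g x y) (dstar f x y).
  have [hD0 _] := HD x.
  have : D x * vnorm (dstar g x y) <= D x * (vnorm (dstar f x y) + C * D x ^ r).
    apply: Rmult_le_compat_l => //; lra.
  move=> h3; lra.
move=> [δ [hδ H]]; exists δ; split => //.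
apply: (transfer hδ hC hρ1 HD _ _ H).
  by move=> x y; have := HD x; have := vnorm_ge0 (g x); have := vnorm_ge0 (dstar g x y); nra.
move=> x y hx hDp hy.
have h1 : vnorm (vsub (dstar g x y) (dstar f x y)) <= C * D x ^ r by exact: HC.
have h2 := vnorm_tri_sub (dstar f x y) (dstar g x y).
rewrite vsub_sym in h2.
have [hD0 _] := HD x.
have : D x * vnorm (dstar f x y) <= D x * (vnorm (dstar g x y) + C * D x ^ r).
  apply: Rmult_le_compat_l => //; lra.
move=> h3; lra.
Qed.
End PerG.

Theorem proposition2p14 (n p r : nat) (Sigma : vec n -> Prop)
  (f : vec n -> vec p) :
  closed_vset Sigma -> Sigma (@vzero n) ->
  (1 <= r)%N -> (1 <= p)%N -> (p <= n)%N ->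
  Egerm (r + 1) f ->
  let c1 := forall g, Egerm (r + 1) g -> jet_eq Sigma r f g ->
      exists delta, 0 < delta /\
        gtrsim (fun x => dist_set Sigma x * kuo_df f x + vnorm (g x))
               (fun x => rpow (dist_set Sigma x) (INR r + 1 - delta)) in
  let c2 := forall g, Egerm (r + 1) g -> jet_eq Sigma r f g ->
      exists delta, 0 < delta /\
        gtrsim (fun x => dist_set Sigma x * sqrt (gram_quot g x) + vnorm (g x))
               (fun x => rpow (dist_set Sigma x) (INR r + 1 - delta)) in
  let c3 := forall g, Egerm (r + 1) g -> jet_eq Sigma r f g ->
      exists delta, 0 < delta /\
        gtrsim_sphere
          (fun x y => dist_set Sigma x * vnorm (dstar g x y) + vnorm (g x))
          (fun x _ => rpow (dist_set Sigma x) (INR r + 1 - delta)) in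
  let c4 := forall g, Egerm (r + 1) g -> jet_eq Sigma r f g ->
      exists delta, 0 < delta /\
        gtrsim_sphere
          (fun x y => dist_set Sigma x * vnorm (dstar f x y) + vnorm (g x))
          (fun x _ => rpow (dist_set Sigma x) (INR r + 1 - delta)) in
  (c1 <-> c2) /\ (c1 <-> c3) /\ (c1 <-> c4).
Proof.
move=> _ S0 _ hp _ hf c1 c2 c3 c4.
have e14 : c1 <-> c4.
  split=> H g hg hj; have [e1 e2] := E14 r f g S0 hp; [apply: e1 | apply: e2]; exact: H g hg hj.
have e34 : c3 <-> c4.
  split=> H g hg hj; have [e1 e2] := E34 (r := r) S0 hf hg hj; [apply: e1 | apply: e2]; exact: H g hg hj.
have e23 : c2 <-> c3.
  split=> H g hg hj; have [e1 e2] := E23 r g S0 hp; [apply: e1 | apply: e2]; exact: H g hg hj.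
tauto.
Qed.
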